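(* Let $X$ be an $n$-dimensional projective space over a field and $K$ a $k$-dimensional subspace of $X$ with $-1\le k\le n-3$. Let $\mathcal B_K\subseteq\mathrm{Gr}_1(K)$ be a $(2,1)$-blocking set in $K$, let $\mathcal B_{X/K}$ be a $(2,1)$-blocking set in $X/K$, and for every point $P\in\mathrm{Gr}_0(K)$ let $\mathcal B_{X/P}$ be a $(1,0)$-blocking set in $X/P$ (i.e. a set of lines of $X$ through $P$ such that every plane of $X$ through $P$ contains one of them). Assume that for every line $L\in\mathrm{Gr}_1(K)\setminus\mathcal B_K$, the set $\bigcup_{P\in\mathrm{Gr}_0(L)}\bigl(\mathcal B_{X/P}\setminus\mathrm{Gr}_0(K/P)\bigr)$ blocks $\mathcal S_L:=\{S\in\mathrm{Gr}_2(X): K\cap S=L\}$, i.e. every $S\in\mathcal S_L$ contains one of its elements. Then the disjoint union $$\mathcal B:=\{T\in\mathrm{Gr}_1(X):\langle K,T\rangle\in\mathcal B_{X/K}\}\ \cup\ \bigcup_{P\in\mathrm{Gr}_0(K)}\bigl(\mathcal B_{X/P}\setminus\mathrm{Gr}_0(K/P)\bigr)\ \cup\ \mathcal B_K$$ is a $(2,1)$-blocking set in $X$.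
   Context: Projective dimension is used; $\mathrm{Gr}_d(Y)$ is the set of $d$-dimensional subspaces of $Y$. For a $k$-dimensional subspace $K$ of $X$, the quotient $X/K$ is the projective space of dimension $\dim X-k-1$ whose $r$-dimensional subspaces are the $(r+k+1)$-dimensional subspaces of $X$ containing $K$; $\langle K,T\rangle$ is regarded as an element of $X/K$. For a point $P$ of $K$, $K/P$ is the quotient of $K$ by $P$, so $\mathrm{Gr}_0(K/P)$ is the set of lines of $K$ through $P$ and $\mathrm{Gr}_0(X/P)$ the set of lines of $X$ through $P$. For $-1\le t\le s$, an $(s,t)$-blocking set in a projective space $Y$ is a set of $t$-dimensional subspaces of $Y$ such that every $s$-dimensional subspace of $Y$ contains at least one of them. *)

(* Defs.v *)
(* Projective space of projective dimension n over a field F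
   = lattice of vector subspaces of 'rV[F]_(n.+1); a projective d-dimensional
   subspace is a vector subspace of dimension d+1. *)
From HB Require Import structures.
From mathcomp Require Import all_boot all_order all_algebra.
Set Implicit Arguments. Unset Strict Implicit. Unset Printing Implicit Defensive.
Import GRing.Theory.
Local Open Scope ring_scope.

Section Proj.
Variables (F : fieldType) (vT : vectType F).

(* qGr K Y U r : U is an r-dimensional (projective) subspace of the quotient
   Y/K, i.e. a subspace of Y containing K of vector dimension \dim K + r + 1.
   With K = 0 this is Gr_r(Y). *)
Definition qGr (K Y U : {vspace vT}) (r : nat) : Prop :=
  [/\ (K <= U)%VS, (U <= Y)%VS & \dim U = (\dim K + r.+1)%N].

Definition blocking (K Y : {vspace vT}) (s t : nat) (B : {vspace vT} -> Prop)
  : Prop :=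
  (forall T, B T -> qGr K Y T t) /\
  (forall S, qGr K Y S s -> exists T, B T /\ (T <= S)%VS).

End Proj.

(* Main.v *)
Require Import Defs.
From HB Require Import structures.
From mathcomp Require Import all_boot all_order all_algebra.
From mathcomp Require Import zify.
From Stdlib Require Import Classical.
Import GRing.Theory.
Local Open Scope ring_scope.

Theorem proposition3p19 (F : fieldType) (n : nat)
  (K : {vspace 'rV[F]_(n.+1)})
  (BK BXK : {vspace 'rV[F]_(n.+1)} -> Prop)
  (BXP : {vspace 'rV[F]_(n.+1)} -> {vspace 'rV[F]_(n.+1)} -> Prop) :
  (\dim K + 2 <= n)%N ->
  blocking 0%VS K 2 1 BK ->
  blocking K fullv 2 1 BXK ->
  (forall P, qGr 0%VS K P 0 -> blocking P fullv 1 0 (BXP P)) ->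
  (forall L, qGr 0%VS K L 1 -> ~ BK L ->
     forall S, qGr 0%VS fullv S 2 -> (K :&: S)%VS = L ->
       exists T, (T <= S)%VS /\
         exists P, [/\ qGr 0%VS L P 0, BXP P T & ~ qGr P K T 0]) ->
  let B1 := fun T => qGr 0%VS fullv T 1 /\ BXK (K + T)%VS in
  let B2 := fun T => exists P, [/\ qGr 0%VS K P 0, BXP P T & ~ qGr P K T 0] in
  blocking 0%VS fullv 2 1 (fun T => [\/ B1 T, B2 T | BK T]) /\
  (forall T, ~ (B1 T /\ B2 T)) /\ (forall T, ~ (B1 T /\ BK T)) /\
  (forall T, ~ (B2 T /\ BK T)).
Proof.
move=> _ [BKm BKb] [BXKm BXKb] BXPh H5 B1 B2.
have B2m : forall T, B2 T -> exists P, [/\ qGr 0%VS K P 0, (P <= T)%VS,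
    \dim T = 2%N & ~ (T <= K)%VS].
  move=> T [P [HP HT HnK]]; have [m _] := BXPh P HP.
  have [PT _ dT] := m T HT; have [_ _ dP] := HP.
  rewrite dimv0 /= in dP.
  exists P; split => //; first by rewrite dT dP.
  move=> TK; apply: HnK; split => //; by rewrite dT dP.
split; last split; last split.
- split.
  + move=> T [[h _]|/B2m [P [_ _ dT _]]|/BKm [_ TK dT]].
    * exact: h.
    * by rewrite /qGr sub0v subvf dimv0 dT.
    * exact: (And3 (sub0v T) (subvf T) dT).
  + move=> S [_ _ dS]; rewrite dimv0 /= in dS.
    have dI : (\dim (K :&: S) <= \dim S)%N by apply: dimvS; exact: capvSr.
    have hsum := dimv_sum_cap K S.
    have : (\dim (K :&: S) = 0 \/ \dim (K :&: S) = 1 \/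
            \dim (K :&: S) = 2 \/ \dim (K :&: S) = 3)%N by lia.
    case=> [d0|[d1|[d2|d3]]].
    *
      have hKS : qGr K fullv (K + S) 2 by split; rewrite ?addvSl ?subvf //; lia.
      have [T' [hT' T'le]] := BXKb _ hKS.
      have [KT' _ dT'] := BXKm _ hT'.
      pose T := (T' :&: S)%VS.
      have h1 := dimv_sum_cap T' S.
      have h2 : (\dim (T' + S) <= \dim (K + S))%N.
        by apply: dimvS; rewrite subv_add T'le addvSr.
      have h3 := dimv_sum_cap K T.
      have h4 : (\dim (K :&: T) <= \dim (K :&: S))%N.
        by apply: dimvS; apply: capvS => //; exact: capvSr.
      have h5 : (\dim (K + T) <= \dim T')%N.
        by apply: dimvS; rewrite subv_add KT' capvSl.
      have dT : \dim T = 2%N by rewrite -/T in h1; lia.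
      have eKT : (K + T)%VS = T'.
        apply/eqP; rewrite eqEdim subv_add KT' capvSl /=; lia.
      exists T; split; last exact: capvSr.
      constructor 1; split; last by rewrite eKT.
      by rewrite /qGr sub0v subvf dimv0 dT.
    *
      set P := (K :&: S)%VS in d1 *.
      have HP : qGr 0%VS K P 0 by split; rewrite ?sub0v ?capvSl ?dimv0.
      have [m b] := BXPh P HP.
      have hS : qGr P fullv S 1 by split; rewrite ?capvSr ?subvf //; lia.
      have [T [HT TS]] := b S hS.
      exists T; split => //; constructor 2; exists P; split => //.
      move=> [_ TK dT]; have [_ _ dT'] := m T HT.
      have : (\dim T <= \dim P)%N by apply: dimvS; rewrite subv_cap TK.
      lia.
    * set L := (K :&: S)%VS in d2 *.
      have HL : qGr 0%VS K L 1 by split; rewrite ?sub0v ?capvSl ?dimv0.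
      case: (classic (BK L)) => hL.
      - exists L; split; [by constructor 3 | exact: capvSr].
      - have [T [TS [P [HP HT HnK]]]] :=
          H5 L HL hL S ltac:(split; rewrite ?sub0v ?subvf ?dimv0 //; lia) erefl.
        exists T; split => //; constructor 2; exists P; split => //.
        have [_ PL dP] := HP; split; rewrite ?sub0v //.
        by apply: subv_trans PL (capvSl _ _).
    * have SK : (S <= K)%VS.
        have : (K :&: S)%VS == S by rewrite eqEdim capvSr /= d3 dS.
        by move/eqP <-; exact: capvSl.
      have hS : qGr 0%VS K S 2 by split; rewrite ?sub0v ?dimv0 //; lia.
      have [T [HT TS]] := BKb S hS.
      by exists T; split => //; constructor 3.
- move=> T [[_ hX] /B2m [P [[_ PK dP] PT dT _]]].
  have [_ _ d] := BXKm _ hX.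
  have h := dimv_sum_cap K T.
  have : (\dim P <= \dim (K :&: T))%N by apply: dimvS; rewrite subv_cap PK PT.
  rewrite dimv0 /= in dP; lia.
- move=> T [[_ hX] /BKm [_ TK dT]].
  have [_ _ d] := BXKm _ hX.
  move: d; have -> : (K + T)%VS = K by apply/eqP; rewrite eqEdim subv_add subvv TK dimvS // addvSl.
  lia.
- by move=> T [/B2m [P [_ _ _ nK]] /BKm [_ TK _]].
Qed.
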